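(* For $n=0,1,2,\ldots$ let $R_n=\sum_{k=0}^n\binom{n}{k}\binom{n+k}{k}\frac{1}{2k-1}$. Then $\lim_{n\to\infty}\frac{\sqrt[n+1]{R_{n+1}}}{\sqrt[n]{R_n}}=1$. *)

(* Defs.v *)
From HB Require Import structures.
From mathcomp Require Import all_boot all_order all_algebra.
From mathcomp Require Import all_classical all_reals all_analysis.
Set Implicit Arguments. Unset Strict Implicit. Unset Printing Implicit Defensive.
Import Order.TTheory GRing.Theory Num.Theory.
Local Open Scope ring_scope.

Definition Rseq (R : realType) (n : nat) : R :=
  \sum_(0 <= k < n.+1) ('C(n, k) * 'C(n + k, k))%:R / (2 * k%:R - 1).

(* Main.v *)
Require Import Defs.
From HB Require Import structures.
From mathcomp Require Import all_boot all_order all_algebra.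
From mathcomp Require Import all_classical all_reals all_analysis.
From mathcomp Require Import zify ring lra.
Import Order.TTheory GRing.Theory Num.Theory numFieldNormedType.Exports.

Set Implicit Arguments. Unset Strict Implicit.
Section Acomb.
Local Open Scope nat_scope.

Lemma binC2 n k : 'C(n, k) <= 2 ^ n.
Proof.
elim: n k => [|n IH] [|k] //=; rewrite ?bin0 ?expn_gt0 //.
by rewrite binS expnS mul2n -addnn leq_add.
Qed.

Lemma binL2 n k : k <= n -> 'C(n.+1, k) <= n.+1 * 'C(n, k).
Proof.
move=> kn; have := mul_bin_down n.+1 k; rewrite /= => ->.
rewrite -[X in X <= _]mul1n leq_mul2r; apply/orP; right; lia.
Qed.

Lemma binL3 n k : k <= n.+1 -> 'C(n.+1 + k, k) <= 2 * 'C(n + k, k).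
Proof.
move=> kn; have := mul_bin_down (n + k).+1 k.
rewrite /= => H.
have E : (n + k).+1 - k = n.+1 by lia.
rewrite E in H.
rewrite addSn -(leq_pmul2l (ltn0Sn n)) -H mulnA.
apply: leq_mul => //; lia.
Qed.

Definition tt_ n k := 'C(n, k) * 'C(n + k, k).

Lemma tt_up n k : k <= n -> tt_ n.+1 k <= 2 * n.+1 * tt_ n k.
Proof.
move=> kn; rewrite /tt_.
apply: (leq_trans (leq_mul (binL2 kn) (binL3 (ltnW (kn : k < n.+1))))).
set a := 'C(n, k); set b := 'C(n + k, k).
have -> : n.+1 * a * (2 * b) = 2 * n.+1 * (a * b) by nia.
by [].
Qed.

Lemma tt_mono n k : tt_ n k <= tt_ n.+1 k.
Proof. by rewrite /tt_ leq_mul // leq_bin2l // addSn. Qed.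

Lemma tt_last n : tt_ n.+1 n.+1 <= 2 * (2 * n).+1 * tt_ n n.
Proof.
rewrite /tt_ !binn !mul1n.
have H := mul_bin_diag (n + n).+2 n.
rewrite /= in H.
have e1 : n.+1 + n.+1 = (n + n).+2 by lia.
have e2 : (n + n).+2 = n.+1 * 2 by lia.
have E : 'C((n + n).+2, n.+1) = 2 * 'C((n + n).+1, n).
  apply/eqP; rewrite -(eqn_pmul2l (ltn0Sn n)) -H e2 mulnA //.
rewrite e1 E -mulnA leq_mul2l /=.
have e3 : (n + n).+1 = (n + n).+1 by [].
rewrite (_ : (2 * n).+1 = (n + n).+1); last by lia.
apply: binL2; lia.
Qed.

Lemma tt_bound n k : k <= n -> tt_ n k <= 8 ^ n.
Proof.
move=> kn; rewrite /tt_ (_ : 8 = 2 * 4) // expnMn leq_mul ?binC2 //.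
apply: (leq_trans (binC2 _ _)).
rewrite (_ : 4 = 2 ^ 2) // -expnM leq_pexp2l //; lia.
Qed.

End Acomb.
Unset Implicit Arguments. Set Strict Implicit.

Local Open Scope classical_set_scope.
Local Open Scope ring_scope.

Section S.
Variable R : realType.

Definition dd (k : nat) : R := 2 * k%:R - 1.
Definition S n : R := \sum_(1 <= k < n.+1) (tt_ n k)%:R / dd k.

Lemma dd_gt0 k : (1 <= k)%N -> 0 < dd k.
Proof. move=> k1; rewrite /dd; have : (1:R) <= k%:R by rewrite ler1n. lra. Qed.

Lemma term_ge0 n k : (1 <= k)%N -> 0 <= (tt_ n k)%:R / dd k.
Proof. by move=> k1; rewrite divr_ge0 // ltW // dd_gt0. Qed.

Lemma RseqE n : Rseq R n = S n - 1.
Proof.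
rewrite /Rseq big_ltn // /S /dd /tt_ /= !bin0 mulr0 add0r muln1 invrN invr1 mulrN1 addrC; congr (_ - _).
Qed.

Lemma S_ge0 n : 0 <= S n.
Proof.
rewrite /S big_nat_cond; apply: sumr_ge0 => k /andP[/andP[k1 _] _].
exact: term_ge0.
Qed.

Lemma S_split n : S n.+1 =
  \sum_(1 <= k < n.+1) (tt_ n.+1 k)%:R / dd k + (tt_ n.+1 n.+1)%:R / dd n.+1.
Proof. by rewrite /S big_nat_recr. Qed.

Lemma S_last n : (1 <= n)%N -> (tt_ n n)%:R / dd n <= S n.
Proof.
case: n => // n _; rewrite S_split lerDr.
rewrite big_nat_cond; apply: sumr_ge0 => k /andP[/andP[k1 _] _].
exact: term_ge0.
Qed.

Lemma S_le n : S n <= S n.+1.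
Proof.
rewrite S_split; apply: ler_wpDr; first by apply: term_ge0.
rewrite /S big_nat_cond [X in _ <= X]big_nat_cond.
apply: ler_sum => k /andP[/andP[k1 _] _].
by apply: ler_wpM2r; [rewrite invr_ge0 ltW // dd_gt0 | rewrite ler_nat tt_mono].
Qed.

Lemma S_up n : (1 <= n)%N -> S n.+1 <= 6 * n.+1%:R * S n.
Proof.
move=> n1; rewrite S_split.
have h1 : \sum_(1 <= k < n.+1) (tt_ n.+1 k)%:R / dd k <= 2 * n.+1%:R * S n.
  rewrite /S mulr_sumr big_nat_cond [X in _ <= X]big_nat_cond.
  apply: ler_sum => k /andP[/andP[k1 kn] _].
  rewrite mulrA; apply: ler_wpM2r; first by rewrite invr_ge0 ltW // dd_gt0.
  by rewrite -!natrM ler_nat; apply: tt_up.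
have h2 : (tt_ n.+1 n.+1)%:R / dd n.+1 <= 2 * (dd n) * ((tt_ n n)%:R / dd n).
  have := tt_last n; rewrite -(ler_nat R) !natrM => h.
  have ddn : dd n.+1 = (2 * n).+1%:R.
    have e1 : ((2 * n).+1%:R : R) = 2 * n%:R + 1 by rewrite -natr1 natrM.
    have e2 : (n.+1%:R : R) = n%:R + 1 by rewrite -natr1.
    rewrite /dd e1 e2; lra.
  have ddp : 0 < dd n by rewrite dd_gt0.
  rewrite ddn ler_pdivrMr ?ltr0n // -mulrA [dd n * _]mulrC divfK ?gt_eqF //.
  nra.
have h3 := @S_last n n1.
have h4 : 0 <= (tt_ n n)%:R / dd n by apply: term_ge0.
have h5 : dd n <= 2 * n.+1%:R by rewrite /dd mulrS; lra.
have h6 := S_ge0 n.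
have hn : 0 <= dd n by rewrite ltW // dd_gt0.
nra.
Qed.

End S.

Section C.
Variable R : realType.

Lemma S1 : S R 1 = 2.
Proof. rewrite /S big_nat1 /tt_ /dd /= mulr1 binn bin1 /=.
have -> : (2:R) - 1 = 1 by lra.
by rewrite divr1.
Qed.

Lemma S_ge2 n : (1 <= n)%N -> 2 <= S R n.
Proof.
elim: n => // n IH _; case: n IH => [|n] IH; first by rewrite S1.
exact: le_trans (IH isT) (S_le _ _).
Qed.

Lemma S_ub n : S R n <= (16 ^ n)%:R.
Proof.
apply: (@le_trans _ _ (\sum_(1 <= k < n.+1) (8 ^ n)%:R)).
  rewrite /S big_nat_cond [X in _ <= X]big_nat_cond.
  apply: ler_sum => k /andP[/andP[k1 kn] _].
  have d1 : 1 <= dd R k.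
    have : (1:R) <= k%:R by rewrite ler1n.
    rewrite /dd; lra.
  apply: (@le_trans _ _ (tt_ n k)%:R).
    by rewrite ler_pdivrMr ?(lt_le_trans ltr01 d1) // ler_peMr // ler0n.
  by rewrite ler_nat tt_bound.
rewrite sumr_const_nat subn1 /= -mulrnA ler_nat.
rewrite (_ : 16 = 2 * 8)%N // expnMn mulnC leq_mul //.
exact: ltnW (ltn_expl _ _).
Qed.

Lemma R_ge1 n : (1 <= n)%N -> 1 <= Rseq R n.
Proof. by move=> n1; rewrite RseqE; have := @S_ge2 n n1; lra. Qed.

Lemma R_mono n : Rseq R n <= Rseq R n.+1.
Proof. by rewrite !RseqE; have := S_le R n; lra. Qed.

Lemma R_up n : (1 <= n)%N -> Rseq R n.+1 <= 12 * n.+1%:R * Rseq R n.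
Proof.
move=> n1; rewrite !RseqE; have := @S_up R n n1; have := @S_ge2 n n1.
have : (0:R) <= n.+1%:R by [].
nra.
Qed.

Lemma R_ub n : Rseq R n <= (16 ^ n)%:R.
Proof. by rewrite RseqE; have := S_ub n; lra. Qed.

End C.

Section D.
Variable R : realType.

Definition ee (m : nat) : R :=
  (m.+1%:R)^-1 * ln (Rseq R m.+1) - (m%:R)^-1 * ln (Rseq R m).

Lemma ln_sq (y : R) : 1 <= y -> (ln y) ^+ 2 <= 2 * y.
Proof.
move=> y1; have y0 : 0 < y by lra.
have := expR_ge1Dxn 1 (ln_ge0 y1); rewrite lnK ?posrE //.
rewrite (_ : 2`!%:R = 2 :> R) //; lra.
Qed.

Lemma ee_bound m : (1 <= m)%N ->
  ee m ^+ 2 <= (24 + (ln 16) ^+ 2) / m.+1%:R.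
Proof.
move=> m1.
set M : R := m%:R.
have M1 : 1 <= M by rewrite /M ler1n.
have eM1 : m.+1%:R = M + 1 by rewrite /M -natr1.
have r1 := @R_ge1 R m m1.
have r2 := @R_ge1 R m.+1 (isT : (1 <= m.+1)%N).
have rp1 : 0 < Rseq R m by lra.
have rp2 : 0 < Rseq R m.+1 by lra.
set b := ln (Rseq R m).
set a := ln (Rseq R m.+1) - b.
set c := ln (16 : R).
have c0 : 0 <= c by rewrite /c ln_ge0 //; lra.
have b0 : 0 <= b by rewrite /b ln_ge0.
have bc : b <= M * c.
  rewrite /b /c.
  have h16 : 0 < (16 ^ m)%:R :> R by rewrite ltr0n expn_gt0.
  have := R_ub R m; rewrite -ler_ln ?posrE // natrX lnXn; last by lra.
  by move=> h; rewrite /M mulr_natl.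
have a0 : 0 <= a by rewrite /a subr_ge0 ler_ln ?posrE // R_mono.
have P1 : 1 <= 12 * (M + 1) by lra.
have aP : a <= ln (12 * (M + 1)).
  rewrite /a lerBlDr /b -lnM ?posrE; [|lra|lra].
  rewrite ler_ln ?posrE; [|lra|]; last by apply: mulr_gt0 => //; lra.
  by rewrite -eM1 (@R_up R m m1).
have a2 : a ^+ 2 <= 24 * (M + 1).
  have := @ln_sq (12 * (M + 1)) P1; have := ln_ge0 P1; nra.
set u := b / M.
have u0 : 0 <= u by rewrite /u divr_ge0 //; lra.
have uc : u <= c by rewrite /u ler_pdivrMr; lra.
have eE : ee m = (a - u) / (M + 1).
  rewrite /ee -/M eM1 /a /u -/b; field; lra.
have v2 : (a - u) ^+ 2 <= a ^+ 2 + c ^+ 2 by nra.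
rewrite eE eM1 expr_div_n ler_pdivrMr; last by apply: exprn_gt0; lra.
have -> : (24 + c ^+ 2) / (M + 1) * (M + 1) ^+ 2 = (24 + c ^+ 2) * (M + 1).
  by field; lra.
have : 0 <= c ^+ 2 * M by apply: mulr_ge0; [apply: sqr_ge0 | lra].
nra.
Qed.

End D.

Lemma ee_cvg (R : realType) : ee R n.+1 @[n --> \oo] --> 0.
Proof.
apply/cvgr0Pnorm_lt => eps eps0.
set K : R := 24 + (ln (16 : R)) ^+ 2.
have e2 : 0 < eps ^+ 2 by apply: exprn_gt0.
near=> n.
have hb := @ee_bound R n.+1 isT.
have hn : K / eps ^+ 2 < n%:R by near: n; apply: nbhs_infty_gtr.
have hn2 : K < n%:R * eps ^+ 2 by rewrite -ltr_pdivrMr.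
have n0 : (0 : R) <= n%:R by [].
have hK : K / n.+2%:R < eps ^+ 2.
  rewrite ltr_pdivrMr ?ltr0n //.
  have -> : (n.+2%:R : R) = n%:R + 2 by rewrite -addn2 natrD.
  nra.
have h : ee R n.+1 ^+ 2 < eps ^+ 2 by apply: le_lt_trans hK.
rewrite ltr_norml; apply/andP; split; nra.
Unshelve. all: end_near.
Qed.

Theorem theorem4p4 (R : realType) :
  (Rseq R n.+2) `^ (n.+2%:R)^-1 / (Rseq R n.+1) `^ (n.+1%:R)^-1
    @[n --> \oo] --> (1 : R).
Proof.
have E : forall n, (Rseq R n.+2) `^ (n.+2%:R)^-1 / (Rseq R n.+1) `^ (n.+1%:R)^-1
    = expR (ee R n.+1).
  move=> n.
  have r1 := @R_ge1 R n.+1 isT.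
  have r2 := @R_ge1 R n.+2 isT.
  rewrite /powR !gt_eqF; [|lra|lra].
  by rewrite -expRB /ee.
rewrite (_ : (fun n : nat => _) = (fun n => expR (ee R n.+1))); last first.
  by apply: funext => n; exact: E.
rewrite -expR0.
exact: (continuous_cvg _ (@continuous_expR R 0) (ee_cvg R)).
Qed.
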